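(* Fix $\epsilon,\phi\in\mathbb R$ with $|\epsilon|>1$ and $\phi\ne\epsilon$. For each $n$, let $(\mu_n,\mathbf x_n)$ be an eigenpair of $T_{n,\epsilon,\phi}$ with $\|\mathbf x_n\|_2=1$, and suppose $\mu_n\to\epsilon+\epsilon^{-1}$ as $n\to\infty$. Then: 1. Eventually, $\mu_n$ is an outlier of $T_{n,\epsilon,\phi}$, and there is a constant $c>0$ independent of $n$ such that eventually every eigenvalue $\lambda_n\ne\mu_n$ of $T_{n,\epsilon,\phi}$ satisfies $|\lambda_n-(\epsilon+\epsilon^{-1})|\ge c$. 2. $\|\mathbf x_n-P_{\mathbf v_n}\mathbf x_n\|_2\to0$ as $n\to\infty$, where $\mathbf v_n=[1,\epsilon^{-1},\ldots,\epsilon^{-n+1}]^\top$.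
   Context: For $n\ge2$ and real parameters $\epsilon,\phi$, $T_{n,\epsilon,\phi}$ is the real symmetric tridiagonal $n\times n$ matrix with diagonal entries $(\epsilon,0,\ldots,0,\phi)$ and all sub- and super-diagonal entries equal to $1$. An outlier is an eigenvalue not in $[-2,2]$. For $\mathbf u\in\mathbb R^n\setminus\{0\}$, $P_{\mathbf u}$ denotes the orthogonal projector onto $\mathrm{span}\{\mathbf u\}$: $P_{\mathbf u}\mathbf x=\frac{\mathbf x^\top\mathbf u}{\mathbf u^\top\mathbf u}\mathbf u$. *)

(* Defs.v *)
From HB Require Import structures.
From mathcomp Require Import all_boot all_order all_algebra.
From mathcomp Require Import all_classical all_reals all_analysis.
Set Implicit Arguments. Unset Strict Implicit. Unset Printing Implicit Defensive.
Import Order.TTheory GRing.Theory Num.Theory.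
Local Open Scope ring_scope.

(* T_{n,eps,phi}: symmetric tridiagonal, diagonal (eps,0,...,0,phi),
   off-diagonals 1.  (Meaningful for n >= 2.) *)
Definition Tmat (R : realType) (n : nat) (eps phi : R) : 'M[R]_n :=
  \matrix_(i < n, j < n)
    if i == j then
      (if (i : nat) == 0%N then eps else if (i : nat) == n.-1 then phi else 0)
    else if ((i.+1 == j) || (j.+1 == i))%N then 1 else 0.

Definition norm2 (R : realType) (n : nat) (x : 'cV[R]_n) : R :=
  Num.sqrt (\sum_(i < n) (x i 0) ^+ 2).

Definition projl (R : realType) (n : nat) (u x : 'cV[R]_n) : 'cV[R]_n :=
  (((x^T *m u) 0 0) / ((u^T *m u) 0 0)) *: u.

Definition vvec (R : realType) (n : nat) (eps : R) : 'cV[R]_n :=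
  \col_(i < n) eps ^- i.

Definition outlier (R : realType) (n : nat) (A : 'M[R]_n) (l : R) : Prop :=
  eigenvalue A l /\ 2 < `|l|.

(* Main.v *)
Require Import Defs.
From HB Require Import structures.
From mathcomp Require Import all_boot all_order all_algebra.
From mathcomp Require Import all_classical all_reals all_analysis.
From mathcomp Require Import ring lra.
Import Order.TTheory GRing.Theory Num.Theory.
Local Open Scope classical_set_scope.
Local Open Scope ring_scope.
Set Implicit Arguments. Unset Strict Implicit.

Lemma sqineq (R : realFieldType) (q r u w : R) : `|q| = r -> 0 < r -> r < 1 ->
  (q*u + w)^+2 <= r * u^+2 + w^+2/(1-r).
Proof.
move=> qr r0 r1.
have h1 : 0 < 1 - r by lra.
rewrite -(ler_pM2r h1) mulrDl divfK ?gt_eqF //.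
have : q = r \/ q = - r.
  by case: (ger0P q) qr => _ <-; [left|right; rewrite opprK].
case=> ->.
  have := sqr_ge0 ((1-r)*u - w); have := sqr_ge0 u; nra.
have := sqr_ge0 ((1-r)*u + w); have := sqr_ge0 u; nra.
Qed.

Definition rr {R : realFieldType} (eps : R) := `|eps^-1|.
Definition Gc {R : realFieldType} (eps phi : R) :=
  (2 + `|eps^-1 - eps| + (1 - rr eps)^-1) / `|phi - eps|.
Definition Kc {R : realFieldType} (eps phi : R) :=
  ((phi - eps^-1)^+2 * Gc eps phi ^+2 + (1 - rr eps)^-1) / (1 - rr eps)^+3.

Lemma term_le_sum (R : realFieldType) (N : nat) (g : nat -> R) k :
  (k < N)%N -> (forall i, 0 <= g i) -> g k <= \sum_(i < N) g i.
Proof.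
move=> kN g0; rewrite (bigD1 (Ordinal kN)) //= lerDl.
by apply: sumr_ge0 => i _.
Qed.

Lemma key (R : realFieldType) (eps phi lam tau : R) (f : nat -> R) (N : nat) :
  1 < `|eps| -> phi != eps -> (0 < N)%N ->
  lam * f 0%N = eps * f 0%N + f 1%N ->
  (forall k, (0 < k < N)%N -> lam * f k = f k.-1 + f k.+1) ->
  lam * f N = f N.-1 + phi * f N ->
  \sum_(k < N.+1) f k ^+ 2 = 1 ->
  0 <= tau -> tau <= 1 -> rr eps ^+ N <= tau -> `|lam - (eps + eps^-1)| <= tau ->
  \sum_(k < N.+1) (f k - f 0%N * eps^-1 ^+ k) ^+ 2 <= Kc eps phi * tau ^+ 2.
Proof.
move=> heps hphi N0 E0 Ek EN nrm t0 t1 rt st.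
rewrite /Kc; set q := eps^-1; set r := rr eps; set s := lam - (eps + q).
rewrite -/q in rt st *.
have eps0 : eps != 0 by rewrite -normr_gt0; lra.
have eq1 : eps * q = 1 by rewrite /q mulfV.
have r0 : 0 < r by rewrite /r normr_gt0 invr_eq0.
have r1 : r < 1 by rewrite /r /rr normrV ?unitfE // invf_lt1 //; lra.
have hr1 : 0 < 1 - r by lra.
have fsq : forall k, (k <= N)%N -> f k ^+ 2 <= 1.
  move=> k kN; rewrite -nrm.
  by apply: (@term_le_sum _ N.+1 (fun i => f i ^+ 2)) => // i; exact: sqr_ge0.
have fb : forall k, (k <= N)%N -> `|f k| <= 1.
  by move=> k /fsq h; rewrite -(expr_le1 (n:=2)) // real_normK ?num_real.
pose b k := f k.+1 - eps * f k.
have brec : forall k, (k.+1 < N)%N -> b k.+1 = q * b k + s * f k.+1.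
  move=> k hk; have E := Ek k.+1 hk.
  rewrite /b.
  have -> : f k.+2 = lam * f k.+1 - f k by rewrite E; ring.
  by rewrite /s /q; field.
have rq : `|q| = r by [].
have st' : `|s| <= tau := st.
have rt' : r ^+ N <= tau := rt.
have bbound : forall k, (k < N)%N -> `|b k| <= r^+k * `|b 0%N| + `|s|/(1-r).
  move=> k0; elim: k0 => [|j IH] hk.
    by rewrite expr0 mul1r lerDl divr_ge0 // ltW.
  have h1 := IH (ltnW hk); have h2 := fb j.+1 (ltnW hk).
  rewrite brec //; apply: le_trans (ler_normD _ _) _.
  rewrite !normrM rq.
  have -> : r^+j.+1 * `|b 0%N| + `|s|/(1-r) = r * (r^+j * `|b 0%N| + `|s|/(1-r)) + `|s|.
    by rewrite exprS; field; rewrite gt_eqF.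
  apply: lerD; first by rewrite ler_pM2l.
  by rewrite -[X in _ <= X]mulr1 ler_wpM2l.
have b0 : `|b 0%N| <= tau + `|q - eps|.
  have -> : b 0%N = (s + (q - eps)) * f 0%N.
    rewrite /b /s.
    have -> : f 1%N = lam * f 0%N - eps * f 0%N by rewrite E0; ring.
    by ring.
  rewrite normrM; apply: le_trans (ler_wpM2l (normr_ge0 _) (fb 0%N _)) _ => //.
  by rewrite mulr1; apply: le_trans (ler_normD _ _) _; rewrite lerD2r.
have bN : (phi - eps) * f N = q * b N.-1 + s * f N.
  rewrite /b prednK //.
  have -> : f N.-1 = lam * f N - phi * f N by rewrite EN; ring.
  by rewrite /s /q; field.
have fNb : `|f N| <= tau * Gc eps phi.
  have P0 : 0 < `|phi - eps| by rewrite normr_gt0 subr_eq0.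
  rewrite /Gc mulrA ler_pdivlMr //.
  have H1 : `|phi - eps| * `|f N| <= r * `|b N.-1| + `|s|.
    rewrite -normrM bN; apply: le_trans (ler_normD _ _) _.
    rewrite !normrM rq lerD2l -[X in _ <= X]mulr1 ler_wpM2l //; exact: fb.
  have H2 := bbound N.-1 ltac:(by rewrite ltn_predL).
  have H4 : r * r ^+ N.-1 <= tau by rewrite -exprS prednK.
  have H5 : r * (r ^+ N.-1 * `|b 0%N|) <= tau * (tau + `|q - eps|).
    by rewrite mulrA; apply: ler_pM => //; rewrite mulr_ge0 // ?exprn_ge0 // ltW.
  have H6 : r * (`|s| / (1 - r)) <= tau * (1 - r)^-1.
    apply: le_trans (_ : `|s| / (1 - r) <= _).
      by apply: ler_piMl; [rewrite divr_ge0 // ltW | exact: ltW].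
    by apply: ler_wpM2r => //; rewrite invr_ge0 ltW.
  have H7 : tau * tau <= tau by rewrite -[X in _ <= X]mulr1 ler_wpM2l.
  have H3 : r * `|b N.-1| <= r * (r ^+ N.-1 * `|b 0%N| + `|s| / (1 - r)).
    by rewrite ler_wpM2l // ltW.
  nra.
pose al k := if (k < N)%N then f k.+1 - q * f k else (phi - q) * f N.
have arec : forall k, (k < N)%N -> al k = q * al k.+1 + - (q * s * f k.+1).
  move=> k hk; rewrite /al hk; case: ifP => hk1.
    have E := Ek k.+1 hk1.
    have -> : f k.+2 = lam * f k.+1 - f k by rewrite E /=; ring.
    by rewrite /s /q; field.
  have eN : k.+1 = N by apply/eqP; rewrite eqn_leq hk leqNgt hk1.
  rewrite -eN /= in EN *.
  have -> : f k = lam * f k.+1 - phi * f k.+1 by rewrite EN; ring.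
  by rewrite /s /q; field.
have q2 : q ^+ 2 <= 1.
  by rewrite -real_normK ?num_real // rq expr_le1 // ltW.
have asq : forall k, (k < N)%N ->
    al k ^+2 <= r * al k.+1 ^+ 2 + s^+2 / (1-r) * f k.+1 ^+2.
  move=> k hk; rewrite arec //; apply: le_trans (@sqineq _ q r _ _ rq r0 r1) _.
  rewrite lerD2l sqrrN !exprMn [X in _ <= X]mulrAC.
  apply: ler_wpM2r; first by rewrite invr_ge0 ltW.
  by rewrite -mulrA; apply: ler_piMl => //; rewrite mulr_ge0 ?sqr_ge0.
set A := \sum_(k < N) al k ^+ 2.
have Hsum1 : \sum_(k < N) al k.+1 ^+ 2 <= A + al N ^+ 2.
  have e1 : \sum_(k < N.+1) al k ^+ 2 = al 0%N ^+2 + \sum_(k < N) al k.+1 ^+ 2.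
    by rewrite big_ord_recl.
  have e2 : \sum_(k < N.+1) al k ^+ 2 = A + al N ^+ 2 by rewrite big_ord_recr.
  have := sqr_ge0 (al 0%N); lra.
have Hf1 : \sum_(k < N) f k.+1 ^+ 2 <= 1.
  move: nrm; rewrite big_ord_recl => e; have := sqr_ge0 (f 0%N); lra.
have HA : A <= r * (A + al N ^+2) + s^+2/(1-r).
  rewrite {1}/A; apply: le_trans.
    by apply: ler_sum => k _; apply: (asq k (ltn_ord k)).
  rewrite big_split /= -!mulr_sumr; apply: lerD; first by rewrite ler_wpM2l // ltW.
  by rewrite -[X in _ <= X]mulr1 ler_wpM2l // divr_ge0 // ?sqr_ge0 // ltW.
pose d k := f k - f 0%N * q ^+ k.
have dsq : forall k, (k < N)%N -> d k.+1 ^+ 2 <= r * d k ^+ 2 + (1-r)^-1 * al k ^+2.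
  move=> k hk.
  have -> : d k.+1 = q * d k + al k by rewrite /d /al hk exprS; ring.
  by rewrite [_^-1 * _]mulrC; apply: (@sqineq _ q r _ _ rq r0 r1).
set D := \sum_(k < N.+1) d k ^+ 2.
have D1 : D = \sum_(k < N) d k.+1 ^+ 2.
  by rewrite /D big_ord_recl /= /d expr0 mulr1 subrr expr2 mul0r add0r.
have D2 : \sum_(k < N) d k ^+ 2 <= D.
  by rewrite /D big_ord_recr /= lerDl sqr_ge0.
have HD : D <= r * D + (1-r)^-1 * A.
  rewrite {1}D1; apply: le_trans.
    by apply: ler_sum => k _; apply: (dsq k (ltn_ord k)).
  rewrite big_split /= -!mulr_sumr lerD2r; by rewrite ler_wpM2l // ltW.
set G := Gc eps phi.
have fN2 : f N ^+ 2 <= tau ^+ 2 * G ^+ 2.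
  have hG : 0 <= tau * G by apply: le_trans fNb.
  rewrite -exprMn -real_normK ?num_real //; apply: lerXn2r; rewrite ?nnegrE //.
have alN : al N = (phi - q) * f N by rewrite /al ltnn.
have s2 : s ^+ 2 <= tau ^+ 2.
  by rewrite -real_normK ?num_real //; apply: lerXn2r; rewrite ?nnegrE.
set u := (1 - r)^-1.
have u0 : 0 < u by rewrite invr_gt0.
move: HD; rewrite -/u => HD.
have u1 : u * (1 - r) = 1 by rewrite mulVf ?gt_eqF.
have HA2 : (1 - r) * A <= (phi - q) ^+2 * (tau ^+ 2 * G ^+ 2) + u * tau ^+2.
  have : al N ^+ 2 <= (phi - q) ^+2 * (tau ^+ 2 * G ^+ 2).
    by rewrite alN exprMn; apply: ler_wpM2l => //; exact: sqr_ge0.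
  have : s ^+ 2 / (1 - r) <= u * tau ^+ 2 by rewrite mulrC; apply: ler_wpM2l => //; exact: ltW.
  have : r * al N ^+ 2 <= al N ^+ 2 by apply: ler_piMl; [exact: sqr_ge0| exact: ltW].
  lra.
have A0 : 0 <= A by apply: sumr_ge0 => k _; exact: sqr_ge0.
have HD2 : D <= u * (u * A).
  have : (1 - r) * D <= u * A by lra.
  move=> h; rewrite -[D]mul1r -u1 -mulrA; apply: ler_wpM2l; [exact: ltW| lra].
have HA3 : A <= u * ((phi - q) ^+2 * (tau ^+ 2 * G ^+ 2) + u * tau ^+2).
  rewrite -[A]mul1r -u1 -mulrA; apply: ler_wpM2l; [exact: ltW| lra].
apply: (le_trans HD2).
have -> : ((phi - eps^-1) ^+ 2 * Gc eps phi ^+ 2 + (1 - rr eps)^-1) / (1 - rr eps) ^+ 3 * tau ^+ 2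
   = u * (u * (u * ((phi - q) ^+2 * (tau ^+ 2 * G ^+ 2) + u * tau ^+2))).
  by rewrite /u /q /G -exprVn; ring.
apply: ler_wpM2l; first exact: ltW.
apply: ler_wpM2l; first exact: ltW.
exact: HA3.
Qed.

Lemma sum_delta (R : realFieldType) (n m : nat) (G : nat -> R) :
  \sum_(j < n) (if (j:nat) == m then G j else 0) = if (m < n)%N then G m else 0.
Proof.
elim: n => [|n IH]; first by rewrite big_ord0.
rewrite big_ord_recr /= IH ltnS.
by case: (ltngtP m n) => h; rewrite ?addr0 ?add0r ?h.
Qed.

Definition dg {R : realFieldType} (n : nat) (eps phi : R) (i : nat) :=
  if i == 0%N then eps else if i == n.-1 then phi else 0.

Lemma ifmul (R : realFieldType) (b : bool) (a y : R) :
  (if b then a else 0) * y = if b then a * y else 0.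
Proof. by case: b; rewrite ?mul0r. Qed.

Lemma Tentry (R : realType) n (eps phi : R) (i j : 'I_n) :
  Tmat n eps phi i j = (if (j:nat) == i then dg n eps phi i else 0)
    + (if (j:nat) == i.+1 then 1 else 0)
    + (if (0 < i)%N && ((j:nat) == i.-1) then 1 else 0).
Proof.
rewrite mxE -val_eqE /= /dg; move: (i : nat) (j : nat) => a b.
case: (eqVneq a b) => [<-|ne].
  rewrite ?eqxx (ltn_eqF (ltnSn a)) addr0.
  by case: a => [|a] //=; rewrite ?addr0 // (gtn_eqF (ltnSn a)) /= ?addr0.
rewrite add0r; case: a ne => [|a] ne /=.
  by rewrite orbF addr0 eq_sym.
rewrite eqSS (eq_sym a.+2 b).
case: (eqVneq b a.+2) => [->|n2] /=.
  by rewrite (gtn_eqF (leqnSn a.+1)) addr0.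
by rewrite add0r; case: (b == a).
Qed.

Lemma Trow (R : realType) n (eps phi : R) (x : 'cV[R]_n) (i : 'I_n) (f : nat -> R) :
  (forall j : 'I_n, x j 0 = f j) ->
  (Tmat n eps phi *m x) i 0 = dg n eps phi i * f i
     + (if (i.+1 < n)%N then f i.+1 else 0) + (if (0 < i)%N then f i.-1 else 0).
Proof.
move=> hf; rewrite mxE.
under eq_bigr do rewrite Tentry hf !mulrDl !ifmul !mul1r.
rewrite !big_split /= !sum_delta (@sum_delta _ n i (fun j => dg n eps phi i * f j)) ltn_ord.
case: (0 < i)%N => /=.
  by rewrite sum_delta (leq_ltn_trans (leq_pred _) (ltn_ord i)).
by rewrite big1.
Qed.

Lemma Tsym (R : realType) n (eps phi : R) : (Tmat n eps phi)^T = Tmat n eps phi.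
Proof.
apply/matrixP => i j; rewrite !mxE.
case: (eqVneq i j) => [->|ne] //.
by rewrite orbC.
Qed.

Lemma vec_loc (R : realType) (eps phi lam tau : R) (n : nat) (x : 'cV[R]_n) :
  1 < `|eps| -> phi != eps -> (2 <= n)%N ->
  Tmat n eps phi *m x = lam *: x -> \sum_(i < n) x i 0 ^+ 2 = 1 ->
  0 <= tau -> tau <= 1 -> rr eps ^+ n.-1 <= tau -> `|lam - (eps + eps^-1)| <= tau ->
  exists c, \sum_(i < n) (x i 0 - c * eps^-1 ^+ i) ^+ 2 <= Kc eps phi * tau ^+ 2.
Proof.
case: n x => [|N] x heps hphi n2 HT nrm t0 t1 rt st //.
pose f k := x (inord k) 0.
have hf : forall j : 'I_N.+1, x j 0 = f j by move=> j; rewrite /f inord_val.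
have E : forall k, (k <= N)%N -> lam * f k = dg N.+1 eps phi k * f k
     + (if (k.+1 < N.+1)%N then f k.+1 else 0) + (if (0 < k)%N then f k.-1 else 0).
  move=> k hk; have h := @Trow R _ eps phi x (inord k) f hf.
  by rewrite HT mxE inordK ?ltnS // in h.
have N0 : (0 < N)%N by [].
exists (f 0%N).
have -> : \sum_(i < N.+1) (x i 0 - f 0%N * eps^-1 ^+ i) ^+ 2
        = \sum_(i < N.+1) (f i - f 0%N * eps^-1 ^+ i) ^+ 2.
  by apply: eq_bigr => i _; rewrite hf.
apply: (@key _ eps phi lam tau f N) => //.
- have := E 0%N isT; rewrite /dg /= ltnS N0 addr0 => ->; done.
- move=> k /andP [k0 kN]; have := E k (ltnW kN).
  rewrite /dg /= (gtn_eqF k0) (ltn_eqF kN) ltnS kN k0 mul0r add0r => ->.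
  by rewrite addrC.
- have := E N (leqnn N); rewrite /dg /= (gtn_eqF N0) eqxx ltnn N0 addr0 => ->.
  by rewrite addrC.
- by rewrite -nrm; apply: eq_bigr => i _; rewrite hf.
Qed.

Lemma sum_sq_expand (R : realFieldType) n (a b : 'I_n -> R) (al be : R) :
  \sum_(i < n) (al * a i + be * b i) ^+ 2 =
  al ^+ 2 * \sum_(i < n) a i ^+ 2 + 2 * al * be * \sum_(i < n) (a i * b i)
  + be ^+ 2 * \sum_(i < n) b i ^+ 2.
Proof.
rewrite !mulr_sumr -!big_split; apply: eq_bigr => i _ /=; ring.
Qed.

Lemma no_two (R : realFieldType) n (x y v : 'I_n -> R) c1 c2 d :
  \sum_(i < n) x i ^+ 2 = 1 -> \sum_(i < n) y i ^+ 2 = 1 ->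
  \sum_(i < n) (x i * y i) = 0 ->
  \sum_(i < n) (x i - c1 * v i) ^+ 2 <= d ->
  \sum_(i < n) (y i - c2 * v i) ^+ 2 <= d -> d < 1/2 -> False.
Proof.
move=> hx hy hxy h1 h2 hd.
have e1 := sum_sq_expand x y c2 (- c1).
rewrite hx hy hxy in e1.
have h3 : \sum_(i < n) (c2 * x i + - c1 * y i) ^+ 2 <=
    2 * c2 ^+ 2 * d + 2 * c1 ^+ 2 * d.
  apply: (@le_trans _ _ (\sum_(i < n) (2 * c2 ^+ 2 * (x i - c1 * v i) ^+ 2
                          + 2 * c1 ^+ 2 * (y i - c2 * v i) ^+ 2))).
    apply: ler_sum => i _.
    have := sqr_ge0 (c2 * (x i - c1 * v i) + c1 * (y i - c2 * v i)).
    have -> : c2 * x i + - c1 * y i = c2 * (x i - c1 * v i) - c1 * (y i - c2 * v i)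
      by ring.
    move=> H; nra.
  rewrite big_split /= -!mulr_sumr.
  by apply: lerD; apply: ler_wpM2l => //; rewrite mulr_ge0 // ?sqr_ge0.
have c10 : c1 = 0.
  apply/eqP; rewrite -sqrf_eq0 eq_le sqr_ge0 andbT.
  rewrite e1 !mulr1 mulr0 addr0 sqrrN in h3.
  have h4 : (1 - 2 * d) * (c1 ^+ 2 + c2 ^+ 2) <= 0 by nra.
  rewrite pmulr_rle0 in h4; last by lra.
  have := sqr_ge0 c2; lra.
move: h1; rewrite c10.
under eq_bigr do rewrite mul0r subr0.
rewrite hx; lra.
Qed.

Lemma sum_sq_sub (R : realFieldType) n (a b : 'I_n -> R) (c : R) :
  \sum_(i < n) (a i - c * b i) ^+ 2 =
  \sum_(i < n) a i ^+ 2 - 2 * c * \sum_(i < n) (a i * b i)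
  + c ^+ 2 * \sum_(i < n) b i ^+ 2.
Proof.
have := sum_sq_expand a b 1 (- c).
have -> : \sum_(i < n) (1 * a i + - c * b i) ^+ 2 = \sum_(i < n) (a i - c * b i) ^+ 2.
  by apply: eq_bigr => i _; ring.
move=> ->; rewrite expr1n mul1r sqrrN; ring.
Qed.

Lemma dotE (R : realType) n (x v : 'cV[R]_n) :
  (x^T *m v) 0 0 = \sum_(i < n) (x i 0 * v i 0).
Proof. by rewrite mxE; apply: eq_bigr => i _; rewrite mxE. Qed.

Lemma best_approx (R : realType) n (x v : 'cV[R]_n) c :
  0 < \sum_(i < n) v i 0 ^+ 2 ->
  norm2 (x - projl v x) ^+ 2 <= \sum_(i < n) (x i 0 - c * v i 0) ^+ 2.
Proof.
move=> M0; rewrite /norm2 sqr_sqrtr; last by apply: sumr_ge0 => i _; exact: sqr_ge0.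
rewrite /projl !dotE.
set P := \sum_(i < n) (x i 0 * v i 0).
set M := \sum_(i < n) (v i 0 * v i 0).
have MM : M = \sum_(i < n) v i 0 ^+ 2 by apply: eq_bigr => i _; rewrite expr2.
have -> : \sum_(i < n) ((x - (P / M) *: v) i 0) ^+ 2
        = \sum_(i < n) (x i 0 - (P / M) * v i 0) ^+ 2.
  by apply: eq_bigr => i _; rewrite !mxE.
rewrite (sum_sq_sub (fun i => x i 0)) (sum_sq_sub (fun i => x i 0)) -/P -MM.
have M0' : 0 < M by rewrite MM.
set b := P / M.
have Pb : P = b * M by rewrite /b divfK // gt_eqF.
rewrite Pb; have := sqr_ge0 (c - b); nra.
Qed.

Lemma eig_unit (R : realType) n (T : 'M[R]_n) lam : T^T = T -> eigenvalue T lam ->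
  exists y : 'cV[R]_n, T *m y = lam *: y /\ \sum_(i < n) y i 0 ^+ 2 = 1.
Proof.
move=> Ts /eigenvalueP [w Hw w0].
set y0 := w^T.
have Ty0 : T *m y0 = lam *: y0 by rewrite /y0 -{1}Ts -trmx_mul Hw linearZ.
set S := \sum_(i < n) y0 i 0 ^+ 2.
have S0 : 0 < S.
  rewrite lt_def sumr_ge0 ?andbT; last by move=> i _; exact: sqr_ge0.
  apply: contra w0 => /eqP /psumr_eq0P H.
  have {}H := H (fun k _ => sqr_ge0 _).
  apply/eqP/matrixP => i j; rewrite (ord1 i) mxE.
  by have := H j isT; rewrite /y0 mxE => /eqP; rewrite sqrf_eq0 => /eqP ->.
exists ((Num.sqrt S)^-1 *: y0); split.
  by rewrite -scalemxAr Ty0 !scalerA mulrC.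
under eq_bigr do rewrite mxE exprMn.
by rewrite -mulr_sumr exprVn sqr_sqrtr ?ltW // mulVf ?gt_eqF.
Qed.

Lemma orth (R : realType) n (T : 'M[R]_n) (x y : 'cV[R]_n) mu lam :
  T^T = T -> T *m x = mu *: x -> T *m y = lam *: y -> lam != mu ->
  \sum_(i < n) (x i 0 * y i 0) = 0.
Proof.
move=> Ts Tx Ty ne.
have e : lam *: (x^T *m y) = mu *: (x^T *m y).
  by rewrite scalemxAr -Ty mulmxA -{1}Ts -trmx_mul Tx linearZ /= scalemxAl.
move/matrixP: e => /(_ 0 0); rewrite !mxE => e2.
have : (lam - mu) * \sum_(i < n) (x i 0 * y i 0) = 0.
  rewrite mulrBl.
  have -> : \sum_(i < n) (x i 0 * y i 0) = \sum_(j < n) (x^T 0 j * y j 0).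
    by apply: eq_bigr => j _; rewrite mxE.
  by rewrite e2 subrr.
by move/eqP; rewrite mulf_eq0 subr_eq0 (negbTE ne) => /eqP.
Qed.

Lemma eig_of (R : realType) n (T : 'M[R]_n) (x : 'cV[R]_n) mu :
  T^T = T -> T *m x = mu *: x -> \sum_(i < n) x i 0 ^+ 2 = 1 -> eigenvalue T mu.
Proof.
move=> Ts Tx hx; apply/eigenvalueP; exists x^T.
  by rewrite -{1}Ts -trmx_mul Tx linearZ.
rewrite trmx_eq0; apply/eqP => x0; move: hx; rewrite x0 big1 => [/eqP|i _].
  by rewrite eq_sym oner_eq0.
by rewrite mxE expr2 mul0r.
Qed.

Lemma ev_lem (R : realType) (r th tau : R) (mu : nat -> R) :
  0 < r -> r < 1 -> 0 < tau -> mu @ \oo --> (th : R^o) ->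
  \forall n \near \oo, [/\ (2 <= n)%N, r ^+ n.-1 <= tau & `|mu n - th| <= tau].
Proof.
move=> r0 r1 t0 cvmu.
have c1 := cvmu; move/cvgr_dist_le: c1 => /(_ tau t0) c1.
have r1' : `|r| < 1 by rewrite ger0_norm // ltW.
have c2 := cvg_expr r1'; move/cvgr_dist_le: c2 => /(_ (tau * r) (mulr_gt0 t0 r0)) c2.
near=> n.
have n2 : (2 <= n)%N by near: n; exact: nbhs_infty_ge.
have h1 : `|th - mu n| <= tau by near: n; exact: c1.
have h2 : `|0 - r ^+ n| <= tau * r by near: n; exact: c2.
split => //; last by rewrite distrC.
move: h2; rewrite sub0r normrN ger0_norm; last by rewrite exprn_ge0 // ltW.
have e : r ^+ n = r ^+ n.-1 * r by rewrite -exprSr prednK // ltnW.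
by rewrite e ler_pM2r.
Unshelve. all: by end_near.
Qed.

Unset Implicit Arguments.

Theorem theorem3p2 (R : realType) (eps phi : R)
  (mu : nat -> R) (x : forall n : nat, 'cV[R]_n) :
  1 < `|eps| -> phi != eps ->
  (forall n : nat, (2 <= n)%N ->
     Tmat n eps phi *m x n = mu n *: x n /\ norm2 (x n) = 1) ->
  mu @ \oo --> eps + eps^-1 ->
  ((\forall n \near \oo, outlier (Tmat n eps phi) (mu n)) /\
   exists2 c : R, 0 < c &
     \forall n \near \oo, forall lam : R,
       eigenvalue (Tmat n eps phi) lam -> lam != mu n ->
       c <= `|lam - (eps + eps^-1)|) /\
  (fun n => norm2 (x n - projl (vvec n eps) (x n))) @ \oo --> 0.
Proof.
move=> heps hphi H cvmu.
have eps0 : eps != 0 by rewrite -normr_gt0; lra.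
have cvmu' : mu @ \oo --> ((eps + eps^-1 : R) : R^o) := cvmu.
set th := eps + eps^-1 in cvmu' *.
set r := rr eps.
have r0 : 0 < r by rewrite /r /rr normr_gt0 invr_eq0.
have r1 : r < 1 by rewrite /r /rr normrV ?unitfE // invf_lt1 //; lra.
set K := Kc eps phi.
have Ts : forall n, (Tmat n eps phi)^T = Tmat n eps phi by move=> n; exact: Tsym.
have Hs : forall n, (2 <= n)%N ->
    Tmat n eps phi *m x n = mu n *: x n /\ \sum_(i < n) x n i 0 ^+ 2 = 1.
  move=> n /H [h1 h2]; split => //.
  move: h2; rewrite /norm2 => h2.
  rewrite -[LHS]sqr_sqrtr ?h2 ?expr1n //; apply: sumr_ge0 => i _; exact: sqr_ge0.
have thgt : 2 < `|th|.
  set u := eps^-1.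
  have eu : eps * u = 1 by rewrite /u mulfV.
  have ur : `|u| < 1 by [].
  have ne : eps - u != 0.
    rewrite subr_eq0; apply/eqP => h; move: ur; rewrite -h; lra.
  have hsq : 0 < (eps - u) ^+ 2 by rewrite lt_def sqr_ge0 sqrf_eq0 ne.
  have : 4 < `|th| ^+ 2.
    rewrite real_normK ?num_real // /th -/u.
    have -> : (eps + u) ^+ 2 = (eps - u) ^+ 2 + 4 * (eps * u) by ring.
    rewrite eu; lra.
  have := normr_ge0 th; nra.
split; [split|].
- pose tau := (`|th| - 2) / 2.
  have tpos : 0 < tau by rewrite /tau divr_gt0 //; lra.
  apply: filterS (ev_lem r0 r1 tpos cvmu') => n [n2 _ hm].
  split; first exact: (@eig_of R n _ (x n) (mu n) (Ts n) (Hs n n2).1 (Hs n n2).2).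
  have := ler_normD (mu n) (th - mu n); rewrite [mu n + _]addrC subrK.
  have e2 : tau * 2 = `|th| - 2 by rewrite /tau divfK // pnatr_eq0.
  rewrite distrC in hm; lra.
- pose tau0 := (2 * (`|K| + 1))^-1.
  have K0 : 0 <= `|K| by [].
  have tpos : 0 < tau0 by rewrite /tau0 invr_gt0 mulr_gt0 //; lra.
  have e : (`|K| + 1) * tau0 = 1 / 2.
    rewrite /tau0; field; rewrite ?pnatr_eq0 //; apply/eqP; lra.
  have t1 : tau0 <= 1 by nra.
  exists tau0 => //.
  apply: filterS (ev_lem r0 r1 tpos cvmu') => n [n2 hr hm] lam hl hne.
  rewrite leNgt; apply/negP => hlt.
  have [y [Ty ny]] := @eig_unit R n _ lam (Ts n) hl.
  have [c1 hc1] := @vec_loc R eps phi (mu n) tau0 n (x n) heps hphi n2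
     (Hs n n2).1 (Hs n n2).2 (ltW tpos) t1 hr hm.
  have [c2 hc2] := @vec_loc R eps phi lam tau0 n y heps hphi n2
     Ty ny (ltW tpos) t1 hr (ltW hlt).
  have hxy := @orth R n _ (x n) y (mu n) lam (Ts n) (Hs n n2).1 Ty hne.
  apply: (@no_two R n (fun i => x n i 0) (fun i => y i 0) (fun i => eps^-1 ^+ i)
     c1 c2 (K * tau0 ^+ 2)) => //.
    exact: (Hs n n2).2.
  have := ler_norm K; have := sqr_ge0 tau0; nra.
- apply/cvgrPdist_le => e0 e0pos.
  have main : forall e', 0 < e' -> e' <= 1 ->
      \forall n \near \oo, norm2 (x n - projl (vvec n eps) (x n)) <= e'.
    move=> e' ep e1.
    pose tau := e' / (`|K| + 1).
    have K0 : 0 <= `|K| by [].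
    have tpos : 0 < tau by rewrite /tau divr_gt0 //; lra.
    have e : (`|K| + 1) * tau = e' by rewrite /tau mulrC divfK //; apply/eqP; lra.
    have t1 : tau <= e' by nra.
    apply: filterS (ev_lem r0 r1 tpos cvmu') => n [n2 hr hm].
    have [c hc] := @vec_loc R eps phi (mu n) tau n (x n) heps hphi n2
       (Hs n n2).1 (Hs n n2).2 (ltW tpos) (le_trans t1 e1) hr hm.
    have ev : forall i : 'I_n, vvec n eps i 0 = eps^-1 ^+ i.
      by move=> i; rewrite mxE exprVn.
    have v0 : 0 < \sum_(i < n) vvec n eps i 0 ^+ 2.
      have -> : \sum_(i < n) vvec n eps i 0 ^+ 2 = \sum_(i < n) (eps^-1 ^+ i) ^+ 2.
        by apply: eq_bigr => i _; rewrite ev.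
      apply: (@lt_le_trans _ _ 1); first exact: ltr01.
      have := @term_le_sum R n (fun i => (eps^-1 ^+ i) ^+ 2) 0%N (ltnW n2)
        (fun i => sqr_ge0 _).
      by rewrite expr0 expr1n.
    have ba := @best_approx R n (x n) (vvec n eps) c v0.
    have ee : \sum_(i < n) (x n i 0 - c * vvec n eps i 0) ^+ 2 =
              \sum_(i < n) (x n i 0 - c * eps^-1 ^+ i) ^+ 2.
      by apply: eq_bigr => i _; rewrite ev.
    rewrite ee in ba.
    have N0 : 0 <= norm2 (x n - projl (vvec n eps) (x n)) by rewrite /norm2 sqrtr_ge0.
    have h1 := le_trans ba hc.
    have h2 : K * tau ^+ 2 <= e' ^+ 2.
      have := ler_norm K; have := sqr_ge0 tau; nra.
    rewrite -ler_sqr ?nnegrE ?(ltW ep) //; exact: le_trans h2.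
  have N0 : forall n, 0 <= norm2 (x n - projl (vvec n eps) (x n)).
    by move=> n; rewrite /norm2 sqrtr_ge0.
  case: (lerP e0 1) => he.
    apply: filterS (main e0 e0pos he) => n hn /=.
    by rewrite sub0r normrN ger0_norm.
  apply: filterS (main 1 ltr01 (lexx 1)) => n hn /=.
  rewrite sub0r normrN ger0_norm //; lra.
Qed.
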